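(* Let $\rho_0$ be an $n$-qubit density matrix and let $\mathcal{E}$ be a locally scrambling ensemble of $n$-qubit unitaries. For $U\sim\mathcal{E}$ set $\rho=U\rho_0U^\dagger$. Let $g$ be an $n$-qubit Pauli operator (a tensor product of single-qubit Paulis $\mathds{1},X,Y,Z$, not the identity) with support $A=\mathrm{supp}(g)\subseteq[n]$, and let $\rho_A=\mathrm{Tr}_{[n]\setminus A}\rho$ be the reduced state on $A$. Then $$\mathbf{E}_{U\sim\mathcal{E}}\,[\mathrm{Tr}(g\rho)]^2\;\le\;\left(\tfrac{2}{3}\right)^{|A|}\,\mathbf{E}_{U\sim\mathcal{E}}\,D_{\rm HS}^2(\rho_A),$$ where $D_{\rm HS}(\rho_A):=\big\|\rho_A-\mathds{1}/2^{|A|}\big\|_{F}$ is the Frobenius (Hilbert–Schmidt) distance of $\rho_A$ to the maximally mixed state on $A$.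
   Context: An ensemble $\mathcal{E}$ of $n$-qubit unitaries (a probability distribution over unitaries, with expectation $\mathbf{E}_{U\sim\mathcal{E}}$) is called locally scrambling if for every tensor product $\bigotimes_{j=1}^n V_j$ of single-qubit Clifford gates, $U\sim\mathcal{E}$ implies $(\bigotimes_j V_j)U\sim\mathcal{E}$, i.e. $(\bigotimes_j V_j)U$ has the same distribution as $U$. The support $\mathrm{supp}(g)$ of a Pauli string is the set of qubits on which it acts non-trivially. *)

(* Defs.v *)
From HB Require Import structures.
From mathcomp Require Import all_boot all_order all_algebra.
From mathcomp Require Import all_classical all_reals all_analysis.
From mathcomp Require Import complex.
Set Implicit Arguments. Unset Strict Implicit. Unset Printing Implicit Defensive.
Import Order.TTheory GRing.Theory Num.Theory.
Local Open Scope ring_scope.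
Local Open Scope classical_set_scope.

Section QuantumDefs.
Variable R : realType.
Local Notation C := (R[i]).

Definition qconf (n : nat) := {ffun 'I_n -> 'I_2}.

(* n-qubit operators: (2^n) x (2^n) matrices indexed by bit strings *)
Definition op (n : nat) := 'M[C]_#|qconf n|.

Definition adj (m p : nat) (M : 'M[C]_(m, p)) : 'M[C]_(p, m) :=
  (map_mx Num.conj M)^T.

Definition unitary (m : nat) (M : 'M[C]_m) : Prop := M *m adj M = 1%:M.

Definition density (m : nat) (M : 'M[C]_m) : Prop :=
  [/\ adj M = M,
      forall v : 'rV[C]_m, 0 <= (v *m M *m adj v) 0 0
    & \tr M = 1].

Definition tensor (n : nat) (V : 'I_n -> 'M[C]_2) : op n :=
  \matrix_(i, j) \prod_(k < n) V k ((enum_val i : qconf n) k) ((enum_val j : qconf n) k).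

Definition pauliX : 'M[C]_2 := \matrix_(i, j) (if i == j then 0 else 1).
Definition pauliY : 'M[C]_2 :=
  \matrix_(i, j) (if i == j then 0 else if i == 0 then - 'i else 'i)%C.
Definition pauliZ : 'M[C]_2 :=
  \matrix_(i, j) (if i == j then (if i == 0 then 1 else -1) else 0).
Definition pauli1 (a : 'I_4) : 'M[C]_2 :=
  match val a with 0 => 1%:M | 1 => pauliX | 2 => pauliY | _ => pauliZ end.

Definition pauli (n : nat) (p : {ffun 'I_n -> 'I_4}) : op n :=
  tensor (fun k => pauli1 (p k)).
Definition supp (n : nat) (p : {ffun 'I_n -> 'I_4}) : {set 'I_n} :=
  [set k | p k != 0].

Definition hadamard : 'M[C]_2 :=
  (((Num.sqrt 2)^-1)%:C)%C%:M *m
  \matrix_(i, j) (if (i == 1) && (j == 1) then -1 else 1).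
Definition phaseS : 'M[C]_2 :=
  \matrix_(i, j) (if i == j then (if i == 0 then 1 else 'i%C) else 0).
Inductive clifford1 : 'M[C]_2 -> Prop :=
| cliff_H : clifford1 hadamard
| cliff_S : clifford1 phaseS
| cliff_mul U V : clifford1 U -> clifford1 V -> clifford1 (U *m V).

(* bit strings supported on S (zero outside S): basis of the subsystem S *)
Definition cfg (n : nat) (S : {set 'I_n}) :=
  {x : qconf n | [forall k, (k \notin S) ==> (x k == ord0)]}.

Definition join (n : nat) (A : {set 'I_n}) (a b : qconf n) : qconf n :=
  [ffun k => if k \in A then a k else b k].

Definition ptrace (n : nat) (A : {set 'I_n}) (rho : op n)
  : 'M[C]_#|{: cfg A}| :=
  \matrix_(i, j) \sum_(b : {: cfg (~: A)})
     rho (enum_rank (join A (val (enum_val i : cfg A)) (val b)))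
         (enum_rank (join A (val (enum_val j : cfg A)) (val b))).

Definition frob (m : nat) (M : 'M[C]_m) : R :=
  Num.sqrt (complex.Re (\tr (M *m adj M))).

Definition DHS (n : nat) (A : {set 'I_n}) (rhoA : 'M[C]_#|{: cfg A}|) : R :=
  frob (rhoA - ((2 ^ #|A|)%:R^-1 : C)%:M).

(* sigma-algebra on operators generated by the real and imaginary parts of
   the matrix entries (the Borel sigma-algebra of C^(d x d)) *)
Definition op_gen (n : nat) : set (set (op n)) :=
  [set S | exists i j (B : set R), measurable B /\
     (S = (fun M : op n => complex.Re (M i j)) @^-1` B \/
      S = (fun M : op n => complex.Im (M i j)) @^-1` B)].

Definition random_op (d : measure_display) (Omega : measurableType d)
  (n : nat) (X : Omega -> op n) : Prop :=
  forall i j, measurable_fun setT (fun w => complex.Re (X w i j)) /\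
              measurable_fun setT (fun w => complex.Im (X w i j)).

Definition same_distribution (d : measure_display) (Omega : measurableType d)
  (P : probability Omega R) (n : nat) (X Y : Omega -> op n) : Prop :=
  forall S : set (op n), <<s @op_gen n >> S -> P (X @^-1` S) = P (Y @^-1` S).

Definition unitary_ensemble (d : measure_display) (Omega : measurableType d)
  (P : probability Omega R) (n : nat) (U : Omega -> op n) : Prop :=
  random_op U /\ forall w, unitary (U w).

Definition locally_scrambling (d : measure_display) (Omega : measurableType d)
  (P : probability Omega R) (n : nat) (U : Omega -> op n) : Prop :=
  forall V : 'I_n -> 'M[C]_2, (forall k, clifford1 (V k)) ->
    same_distribution P (fun w => tensor V *m U w) U.

End QuantumDefs.

(* Main.v *)
Require Import Defs.
From HB Require Import structures.
From mathcomp Require Import all_boot all_order all_algebra.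
From mathcomp Require Import all_classical all_reals all_analysis.
From mathcomp Require Import measurable_realfun.
From mathcomp Require Import complex.
From mathcomp Require Import ring lra.
Import Order.TTheory GRing.Theory Num.Theory.
Set Implicit Arguments. Unset Strict Implicit. Unset Printing Implicit Defensive.
Local Open Scope ring_scope.
Section Q.
Variable R : realType.
Local Notation C := (R[i]).

Lemma sum2 (F : 'I_2 -> C) : \sum_(i < 2) F i = F 0 + F 1.
Proof. by rewrite big_ord_recl big_ord1; congr (F _ + F _); apply/val_inj. Qed.

Lemma conjcE (x : C) : Num.conj x = (x^*)%C.
Proof. by []. Qed.

Lemma mx2P (M N : 'M[C]_2) : M 0 0 = N 0 0 -> M 0 1 = N 0 1 -> M 1 0 = N 1 0 -> M 1 1 = N 1 1 -> M = N.
Proof.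
move=> h00 h01 h10 h11; apply/matrixP => i j.
have hi : forall k : 'I_2, k = 0 \/ k = 1 by move=> [[|[|//]]] ?; [left|right]; apply/val_inj.
by case: (hi i) => ->; case: (hi j) => ->.
Qed.

Lemma adjE m p (M : 'M[C]_(m, p)) i j : adj M i j = Num.conj (M j i).
Proof. by rewrite !mxE. Qed.

Lemma adj_mul m p q (M : 'M[C]_(m, p)) (N : 'M[C]_(p, q)) : adj (M *m N) = adj N *m adj M.
Proof. by rewrite /adj map_mxM trmx_mul. Qed.

Lemma adj_scalar m (c : C) : adj (c%:M : 'M[C]_m) = (Num.conj c)%:M.
Proof. by apply/matrixP => i j; rewrite !mxE eq_sym; case: (i == j); rewrite ?rmorph0 /= ?mulr1n ?mulr0n. Qed.

Lemma adj1 m : adj (1%:M : 'M[C]_m) = 1%:M.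
Proof. by rewrite adj_scalar rmorph1. Qed.

Lemma adjK m p (M : 'M[C]_(m, p)) : adj (adj M) = M.
Proof. by apply/matrixP => i j; rewrite !mxE conjCK. Qed.

Lemma adjZ m p (c : C) (M : 'M[C]_(m, p)) : adj (c *: M) = Num.conj c *: adj M.
Proof. by apply/matrixP => i j; rewrite !mxE rmorphM. Qed.

Definition conj_by m (V M : 'M[C]_m) := adj V *m M *m V.

Lemma conj_by_mul m (V W M : 'M[C]_m) : conj_by (V *m W) M = conj_by W (conj_by V M).
Proof. by rewrite /conj_by adj_mul !mulmxA. Qed.

Lemma conj_byZ m (V M : 'M[C]_m) c : conj_by V (c *: M) = c *: conj_by V M.
Proof. by rewrite /conj_by -scalemxAr -scalemxAl. Qed.

Lemma conj_by_scale m (c : C) (V M : 'M[C]_m) : Num.conj c = c ->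
  conj_by (c%:M *m V) M = (c * c) *: conj_by V M.
Proof.
move=> cc; rewrite /conj_by adj_mul adj_scalar cc mul_mx_scalar mul_scalar_mx.
by rewrite -scalemxAr -!scalemxAl scalerA.
Qed.

Definition H0 : 'M[C]_2 := \matrix_(i, j) (if (i == 1) && (j == 1) then -1 else 1).
Definition cH : C := (((Num.sqrt 2)^-1)%:C)%C.
Lemma hadamardE : hadamard R = cH%:M *m H0.
Proof. by []. Qed.
Lemma conj_cH : Num.conj cH = cH.
Proof. by rewrite conjcE /cH conjc_real. Qed.
Lemma cH2 : cH * cH * 2 = 1.
Proof.
rewrite /cH -rmorphM /=.
have h : ((Num.sqrt 2)^-1 * (Num.sqrt 2)^-1 : R) = 2^-1.
  by rewrite -invfM -expr2 sqr_sqrtr.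
rewrite h; apply/eqP; rewrite eq_complex /=.
by apply/andP; split; apply/eqP; field.
Qed.

Lemma conjH (M N : 'M[C]_2) : conj_by H0 M = 2 *: N -> conj_by (hadamard R) M = N.
Proof.
move=> h; rewrite hadamardE conj_by_scale ?conj_cH // h scalerA cH2 scale1r //.
Qed.

Lemma H0_1 : conj_by H0 1%:M = 2 *: 1%:M.
Proof. by apply: mx2P; rewrite !mxE !sum2 !mxE !sum2 !mxE /= ?rmorph1 ?rmorphN1; ring. Qed.

Ltac mx2c := apply: mx2P; rewrite !mxE !sum2 !mxE !sum2 !mxE /= ?conjcE /=;
  apply/eqP; rewrite eq_complex /=; apply/andP; split; apply/eqP; ring.

Lemma H0_X : conj_by H0 (pauliX R) = 2 *: pauliZ R.
Proof. mx2c. Qed.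
Lemma H0_Z : conj_by H0 (pauliZ R) = 2 *: pauliX R.
Proof. mx2c. Qed.
Lemma S_X : conj_by (phaseS R) (pauliX R) = (-1) *: pauliY R.
Proof. mx2c. Qed.
Lemma S_Y : conj_by (phaseS R) (pauliY R) = pauliX R.
Proof. mx2c. Qed.

Definition P1 (k : nat) : 'M[C]_2 :=
  match k with 0 => 1%:M | 1 => pauliX R | 2 => pauliY R | _ => pauliZ R end.
Lemma pauli1E (a : 'I_4) : pauli1 R a = P1 (val a).
Proof. by []. Qed.

Definition crelN (i j : nat) := exists V, clifford1 V /\ exists s : R, s * s = 1 /\ conj_by V (P1 i) = (s%:C)%C *: P1 j.

Lemma crel_trans i j k : crelN i j -> crelN j k -> crelN i k.
Proof.
move=> [V1 [c1 [s1 [h1 e1]]]] [V2 [c2 [s2 [h2 e2]]]].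
exists (V1 *m V2); split; first exact: cliff_mul.
exists (s1 * s2); split; first by rewrite mulrACA h1 h2 mulr1.
by rewrite conj_by_mul e1 conj_byZ e2 scalerA -rmorphM.
Qed.

Lemma rc1 : ((1 : R)%:C)%C = 1 :> C. Proof. by []. Qed.
Lemma rcN1 : ((-1 : R)%:C)%C = -1 :> C. Proof. by apply/eqP; rewrite eq_complex /= oppr0 !eqxx. Qed.

Lemma crel_H i j : (conj_by H0 (P1 i) = 2 *: P1 j) -> crelN i j.
Proof.
move=> h; exists (hadamard R); split; first exact: cliff_H.
by exists 1; split; [rewrite mulr1 | rewrite rc1 scale1r; exact: conjH].
Qed.

Lemma crel13 : crelN 1 3. Proof. exact/crel_H/H0_X. Qed.
Lemma crel31 : crelN 3 1. Proof. exact/crel_H/H0_Z. Qed.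
Lemma crel12 : crelN 1 2.
Proof. exists (phaseS R); split; first exact: cliff_S. exists (-1); split; first by rewrite mulrNN mulr1. by rewrite rcN1 S_X. Qed.
Lemma crel21 : crelN 2 1.
Proof. exists (phaseS R); split; first exact: cliff_S. exists 1; split; first by rewrite mulr1. by rewrite rc1 scale1r S_Y. Qed.
Lemma crel00 : crelN 0 0.
Proof.
have h : conj_by (hadamard R) (P1 0) = P1 0 by apply: conjH; exact: H0_1.
exists (hadamard R *m hadamard R); split; first by apply: cliff_mul; exact: cliff_H.
by exists 1; split; [rewrite mulr1 | rewrite rc1 scale1r conj_by_mul !h].
Qed.

Lemma crel_all (a b : 'I_4) : (a == 0) = (b == 0) ->
  exists V, clifford1 V /\ exists s : R, s * s = 1 /\ conj_by V (pauli1 R a) = (s%:C)%C *: pauli1 R b.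
Proof.
rewrite !pauli1E; move: a b => [[|[|[|[|//]]]] ?] [[|[|[|[|//]]]] ?] //= _;
  rewrite -/(crelN _ _).
- exact: crel00.
- exact: crel_trans crel13 crel31.
- exact: crel12.
- exact: crel13.
- exact: crel21.
- exact: crel_trans crel21 crel12.
- exact: crel_trans crel21 crel13.
- exact: crel31.
- exact: crel_trans crel31 crel12.
- exact: crel_trans crel31 crel13.
Qed.
Lemma P1comp (a b a' b' : 'I_2) :
  \sum_(c < 4) pauli1 R c a b * Num.conj (pauli1 R c a' b') = 2 * ((a == a')%:R * (b == b')%:R).
Proof.
have hi : forall k : 'I_2, k = 0 \/ k = 1 by move=> [[|[|//]]] ?; [left|right]; apply/val_inj.
rewrite !big_ord_recl big_ord0 /=.
by case: (hi a) => ->; case: (hi b) => ->; case: (hi a') => ->; case: (hi b') => ->;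
  rewrite /= !mxE /= ?conjcE /=; apply/eqP; rewrite eq_complex /=; apply/andP; split; apply/eqP; ring.
Qed.


Lemma ReD (x y : C) : complex.Re (x + y) = complex.Re x + complex.Re y.
Proof. by case: x; case: y. Qed.

Lemma ReSum (I : finType) (P : pred I) (F : I -> C) :
  complex.Re (\sum_(i | P i) F i) = \sum_(i | P i) complex.Re (F i).
Proof. exact: (big_morph _ ReD). Qed.

Lemma ReJ (z : C) : complex.Re (z * Num.conj z) = complex.Re z ^+ 2 + complex.Im z ^+ 2.
Proof. by case: z => a b /=; ring. Qed.

Lemma two_pow k : (((2 : R) ^+ k)%:C)%C = 2 ^+ k :> C.
Proof. by rewrite rmorphXn /=; congr (_ ^+ _); apply/eqP; rewrite eq_complex /= addr0 !eqxx. Qed.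

Section N.
Variable n : nat.

Lemma sumQ (F : qconf n -> C) : \sum_(i < #|qconf n|) F (enum_val i) = \sum_x F x.
Proof. by rewrite -big_enum_val. Qed.

Lemma tensorE (V : 'I_n -> 'M[C]_2) i j :
  tensor V i j = \prod_k V k ((enum_val i : qconf n) k) ((enum_val j : qconf n) k).
Proof. by rewrite mxE. Qed.

Lemma tensor_mul (V W : 'I_n -> 'M[C]_2) :
  tensor V *m tensor W = tensor (fun k => V k *m W k).
Proof.
apply/matrixP => i j; rewrite !mxE.
under eq_bigr do rewrite !mxE -big_split /=.
rewrite (sumQ (fun y : qconf n => \prod_k (V k ((enum_val i : qconf n) k) (y k) *
   W k (y k) ((enum_val j : qconf n) k)))).
rewrite -(bigA_distr_bigA (fun k c => V k ((enum_val i : qconf n) k) c *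
   W k c ((enum_val j : qconf n) k))) /=.
by apply: eq_bigr => k _; rewrite mxE.
Qed.

Lemma tensor_adj (V : 'I_n -> 'M[C]_2) : adj (tensor V) = tensor (fun k => adj (V k)).
Proof.
apply/matrixP => i j; rewrite !mxE rmorph_prod; apply: eq_bigr => k _; by rewrite !mxE.
Qed.

Lemma tensor_scale (s : 'I_n -> C) (V : 'I_n -> 'M[C]_2) :
  tensor (fun k => s k *: V k) = (\prod_k s k) *: tensor V.
Proof.
apply/matrixP => i j; rewrite !mxE -big_split; apply: eq_bigr => k _; by rewrite !mxE.
Qed.
Lemma ReM_real (x : R) (z : C) : complex.Re ((x%:C)%C * z) = x * complex.Re z.
Proof. by case: z => a b /=; rewrite mul0r subr0. Qed.

Lemma twirl_point (p q : {ffun 'I_n -> 'I_4}) :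
  (forall k, (p k == 0) = (q k == 0)) ->
  exists V : 'I_n -> 'M[C]_2, (forall k, clifford1 (V k)) /\
  forall rho : op R n,
    complex.Re (\tr (pauli R p *m (tensor V *m rho *m adj (tensor V)))) ^+ 2 =
    complex.Re (\tr (pauli R q *m rho)) ^+ 2.
Proof.
move=> hpq.
have h : forall k, exists Vs : 'M[C]_2 * R, clifford1 Vs.1 /\ (Vs.2 * Vs.2 = 1 /\
   conj_by Vs.1 (pauli1 R (p k)) = ((Vs.2)%:C)%C *: pauli1 R (q k)).
  move=> k; have [V [cV [s [hs e]]]] := crel_all (hpq k).
  by exists (V, s).
have [f hf] := fin_all_exists h.
exists (fun k => (f k).1); split; first by move=> k; case: (hf k).
move=> rho.
set T := tensor _.
have e1 : \tr (pauli R p *m (T *m rho *m adj T)) = \tr (conj_by T (pauli R p) *m rho).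
  by rewrite /conj_by mulmxA mxtrace_mulC !mulmxA.
have e2 : conj_by T (pauli R p) = (\prod_k ((f k).2%:C)%C) *: pauli R q.
  rewrite /conj_by /T /pauli tensor_adj !tensor_mul -tensor_scale.
  by congr tensor; apply: funext => k; case: (hf k) => _ [_ <-].
rewrite e1 e2 -scalemxAl mxtraceZ -rmorph_prod ReM_real exprMn.
suff -> : (\prod_k (f k).2) ^+ 2 = 1 by rewrite mul1r.
by rewrite expr2 -big_split /=; apply: big1 => k _; case: (hf k) => _ [-> _].
Qed.

Definition zoff (S : {set 'I_n}) (x : qconf n) := forall k, k \notin S -> x k = ord0.

Lemma cfgP S (a : cfg S) : zoff S (val a).
Proof. by move=> k hk; case: a => x /= /forallP /(_ k); rewrite hk /= => /eqP. Qed.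

Lemma prod_eq_sub (S : {set 'I_n}) (x y : qconf n) : zoff S x -> zoff S y ->
  \prod_k (if k \in S then ((x k == y k)%:R : C) else 1) = ((x == y)%:R).
Proof.
move=> hx hy; have [->|ne] := eqVneq x y.
  by apply: big1 => k _; rewrite eqxx; case: ifP.
have [k hk] : exists k, x k != y k.
  apply/existsP; apply: contraNT ne => /existsPn h; apply/eqP/ffunP => k; exact/eqP/negPn/h.
have kS : k \in S by apply: contraNT hk => kS; rewrite hx // hy.
by rewrite (bigD1 k) //= kS (negbTE hk) mul0r.
Qed.

Lemma Kdistr (J : finType) (j0 : J) (S : {set 'I_n}) (f : 'I_n -> J -> C) :
  \sum_(q : {ffun 'I_n -> J} | [forall k, (k \notin S) ==> (q k == j0)]) \prod_k f k (q k)
  = \prod_k (if k \in S then \sum_c f k c else f k j0).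
Proof.
pose g k c := if k \in S then f k c else (c == j0)%:R * f k c.
transitivity (\prod_k \sum_c g k c); last first.
  apply: eq_bigr => k _; rewrite /g; case: ifP => // _.
  rewrite (bigD1 j0) //= eqxx mul1r big1 ?addr0 // => c /negbTE ->; by rewrite mul0r.
rewrite bigA_distr_bigA big_mkcond /=; apply: eq_bigr => q _.
case: ifP => [/forallP h | /negbT].
  apply: eq_bigr => k _; rewrite /g; case: ifP => // kS.
  by move: (h k); rewrite kS /= => /eqP ->; rewrite eqxx mul1r.
rewrite negb_forall => /existsP [k]; rewrite negb_imply => /andP [kS qk].
by rewrite (bigD1 k) //= /g (negbTE kS) (negbTE qk) !mul0r.
Qed.

Lemma sum_delta (I : finType) (i : I) (F : I -> C) : \sum_j (i == j)%:R * F j = F i.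
Proof.
rewrite (bigD1 i) //= eqxx mul1r big1 ?addr0 // => j /negbTE.
by rewrite eq_sym => ->; rewrite mul0r.
Qed.

Lemma restr_proof (S : {set 'I_n}) (x : qconf n) :
  [forall k, (k \notin S) ==> ([ffun k => if k \in S then x k else ord0] k == ord0)].
Proof. by apply/forallP => k; apply/implyP => kS; rewrite ffunE (negbTE kS). Qed.

Definition restr (S : {set 'I_n}) (x : qconf n) : cfg S :=
  exist _ [ffun k => if k \in S then x k else ord0] (restr_proof S x).

Lemma restr_val (S : {set 'I_n}) (a : cfg S) : restr S (val a) = a.
Proof.
apply/val_inj/ffunP => k; rewrite /= ffunE; case: ifP => // /negbT kS.
by rewrite (cfgP a kS).
Qed.

Lemma cfg_sum (S : {set 'I_n}) (G : qconf n -> C) :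
  \sum_(a : cfg S) G (val a) = \sum_(x : qconf n | [forall k, (k \notin S) ==> (x k == ord0)]) G x.
Proof.
rewrite (reindex (fun a : cfg S => val a)) /=; last first.
  exists (restr S) => x hx; first exact: restr_val.
  apply/ffunP => k; rewrite /= ffunE; case: ifP => // /negbT kS.
  by move: hx; rewrite inE => /forallP /(_ k); rewrite kS => /eqP.
by apply: eq_bigl => a; rewrite (valP a).
Qed.

Lemma split_sum (A : {set 'I_n}) (F : qconf n -> C) :
  \sum_x F x = \sum_(a : cfg A) \sum_(b : cfg (~: A)) F (join A (val a) (val b)).
Proof.
rewrite pair_big /=.
rewrite (reindex (fun p : cfg A * cfg (~: A) => join A (val p.1) (val p.2))) /=.
  by apply: eq_bigl.
exists (fun x => (restr A x, restr (~: A) x)) => [[a b] _ | x _].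
  congr pair; apply/val_inj/ffunP => k; rewrite /= !ffunE.
    by case: (boolP (k \in A)) => kA //=; rewrite (cfgP a kA).
  rewrite !inE; case: (boolP (k \in A)) => kA //=.
  by rewrite (cfgP b) // !inE kA.
apply/ffunP => k; rewrite !ffunE /=; case: (boolP (k \in A)) => kA //=.
by rewrite ?ffunE !inE kA.
Qed.


Section Sub.
Variable A : {set 'I_n}.

Definition sg (i : 'I_#|{: cfg A}|) : qconf n := val (enum_val i : cfg A).
Definition tau (q : {ffun 'I_n -> 'I_4}) (x y : qconf n) : C :=
  \prod_k pauli1 R (q k) (x k) (y k).
Definition ctr q (M : 'M[C]_#|{: cfg A}|) : C :=
  \sum_i \sum_j tau q (sg i) (sg j) * M j i.

Lemma sumA (F : cfg A -> C) : \sum_(i < #|{: cfg A}|) F (enum_val i) = \sum_a F a.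
Proof. by rewrite -big_enum_val. Qed.

Lemma sg_eq i j : (sg i == sg j) = (i == j).
Proof.
apply/eqP/eqP => [h|->] //; apply: enum_val_inj; exact: val_inj.
Qed.

Lemma sgP i : zoff A (sg i).
Proof. exact: cfgP. Qed.

Lemma Kval i j i' j' :
  \sum_(q : {ffun 'I_n -> 'I_4} | [forall k, (k \notin A) ==> (q k == 0)])
     tau q (sg i) (sg j) * Num.conj (tau q (sg i') (sg j'))
  = 2 ^+ #|A| * ((i == i')%:R * (j == j')%:R).
Proof.
under eq_bigr do rewrite /tau rmorph_prod -big_split /=.
rewrite (Kdistr 0 A (fun k c => pauli1 R c (sg i k) (sg j k) * Num.conj (pauli1 R c (sg i' k) (sg j' k)))).
transitivity (\prod_k ((if k \in A then 2 else 1) *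
   ((if k \in A then ((sg i k == sg i' k)%:R : C) else 1) *
    (if k \in A then ((sg j k == sg j' k)%:R : C) else 1)))).
  apply: eq_bigr => k _; case: ifP => kA; first by rewrite P1comp.
  by rewrite !(sgP _ (negbT kA)) /= !mxE /= !mul1r ?conjc1 ?rmorph1.
rewrite big_split /= big_split /= -big_mkcond prodr_const /=.
by rewrite !prod_eq_sub ?sg_eq //; exact: sgP.
Qed.


Lemma parseval (M : 'M[C]_#|{: cfg A}|) :
  \sum_(q : {ffun 'I_n -> 'I_4} | [forall k, (k \notin A) ==> (q k == 0)])
     ctr q M * Num.conj (ctr q M)
  = 2 ^+ #|A| * \sum_i \sum_j M j i * Num.conj (M j i).
Proof.
have E : forall q, ctr q M * Num.conj (ctr q M) = \sum_i \sum_j \sum_i' \sum_j'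
   (tau q (sg i) (sg j) * Num.conj (tau q (sg i') (sg j'))) * (M j i * Num.conj (M j' i')).
  move=> q; rewrite /ctr mulr_suml; apply: eq_bigr => i _; rewrite mulr_suml.
  apply: eq_bigr => j _; rewrite rmorph_sum mulr_sumr; apply: eq_bigr => i' _.
  rewrite rmorph_sum mulr_sumr; apply: eq_bigr => j' _.
  by rewrite rmorphM mulrACA.
rewrite (eq_bigr _ (fun q _ => E q)) exchange_big mulr_sumr; apply: eq_bigr => i _.
rewrite exchange_big mulr_sumr; apply: eq_bigr => j _.
rewrite exchange_big /=.
transitivity (\sum_i' (i == i')%:R * \sum_j' (j == j')%:R * (2 ^+ #|A| * (M j i * Num.conj (M j' i')))); last first.
  by rewrite sum_delta sum_delta.
apply: eq_bigr => i' _; rewrite exchange_big mulr_sumr; apply: eq_bigr => j' _.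
rewrite -mulr_suml Kval; ring.
Qed.

Lemma tau_join (q : {ffun 'I_n -> 'I_4}) (hq : forall k, k \notin A -> q k = 0) (a a' : cfg A) (b b' : cfg (~: A)) :
  tau q (join A (val a) (val b)) (join A (val a') (val b')) = tau q (val a) (val a') * (b == b')%:R.
Proof.
rewrite /tau -(@prod_eq_sub (~: A) (val b) (val b')); try exact: cfgP.
rewrite -big_split /=; apply: eq_bigr => k _; rewrite !ffunE !inE.
case: (boolP (k \in A)) => kA /=; first by rewrite mulr1.
by rewrite hq // (cfgP a kA) (cfgP a' kA) /= !mxE eqxx mul1r.
Qed.

Lemma tr_link (q : {ffun 'I_n -> 'I_4}) (hq : forall k, k \notin A -> q k = 0) (rho : op R n) :
  \tr (pauli R q *m rho) = ctr q (ptrace A rho).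
Proof.
transitivity (\sum_(i < #|qconf n|) \sum_(l < #|qconf n|) tau q (enum_val i) (enum_val l) *
   rho (enum_rank (enum_val l)) (enum_rank (enum_val i))).
  apply: eq_bigr => i _; rewrite mxE; apply: eq_bigr => l _; by rewrite !enum_valK mxE.
rewrite (sumQ (fun x => \sum_(l < #|qconf n|) tau q x (enum_val l) * rho (enum_rank (enum_val l)) (enum_rank x))).
under eq_bigr => x _ do rewrite (sumQ (fun y => tau q x y * rho (enum_rank y) (enum_rank x))).
under eq_bigr do rewrite (split_sum A).
rewrite (split_sum A).
transitivity (\sum_(a : cfg A) \sum_(b : cfg (~: A)) \sum_(a' : cfg A)
  tau q (val a) (val a') * rho (enum_rank (join A (val a') (val b))) (enum_rank (join A (val a) (val b)))).
  apply: eq_bigr => a _; apply: eq_bigr => b _; apply: eq_bigr => a' _.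
  under eq_bigr do rewrite tau_join //.
  rewrite -[RHS](sum_delta b (fun b' : cfg (~: A) => tau q (val a) (val a') * rho (enum_rank (join A (val a') (val b'))) (enum_rank (join A (val a) (val b))))).
  apply: eq_bigr => b' _; ring.
rewrite /ctr -sumA; apply: eq_bigr => i _; rewrite exchange_big -sumA.
apply: eq_bigr => j _; rewrite mxE mulr_sumr.
by apply: eq_bigr => b _.
Qed.

Lemma sum_pauli_diag (c : 'I_4) : c != 0 -> \sum_(x < 2) pauli1 R c x x = 0.
Proof.
move: c => [[|[|[|[|//]]]] ?] //= _; rewrite sum2 !mxE /=; apply/eqP;
  rewrite eq_complex /=; apply/andP; split; apply/eqP; ring.
Qed.

Lemma ctr_scalar (q : {ffun 'I_n -> 'I_4}) (c : C) k0 : k0 \in A -> q k0 != 0 -> ctr q (c%:M) = 0.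
Proof.
move=> k0A qk0.
transitivity (c * \sum_(a : cfg A) tau q (val a) (val a)).
  rewrite /ctr -sumA mulr_sumr; apply: eq_bigr => i _.
  rewrite mulrC -[RHS](sum_delta i (fun j => tau q (sg i) (sg j) * c)); apply: eq_bigr => j _; rewrite mxE eq_sym.
  case: (i == j) => /=; [by rewrite mulr1n mul1r | by rewrite mulr0n mulr0 mul0r].
rewrite (cfg_sum A (fun x => tau q x x)) /tau (Kdistr ord0 A (fun k x => pauli1 R (q k) x x)).
by rewrite (bigD1 k0) //= k0A sum_pauli_diag // mul0r mulr0.
Qed.

Lemma ctrD (q : {ffun 'I_n -> 'I_4}) (M1 M2 : 'M[C]_#|{: cfg A}|) : ctr q (M1 + M2) = ctr q M1 + ctr q M2.
Proof.
rewrite /ctr -big_split; apply: eq_bigr => i _; rewrite -big_split; apply: eq_bigr => j _.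
by rewrite mxE mulrDr.
Qed.

Lemma DHS2 (M : 'M[C]_#|{: cfg A}|) :
  @DHS R n A M ^+ 2 = \sum_i \sum_j complex.Re ((M - ((2 ^ #|A|)%:R^-1 : C)%:M) j i *
      Num.conj ((M - ((2 ^ #|A|)%:R^-1 : C)%:M) j i)).
Proof.
set N := M - _.
have E : complex.Re (\tr (N *m adj N)) = \sum_i \sum_j complex.Re (N j i * Num.conj (N j i)).
  rewrite /mxtrace ReSum exchange_big; apply: eq_bigr => i _.
  rewrite mxE ReSum; apply: eq_bigr => j _; by rewrite !mxE.
rewrite /DHS /frob E sqr_sqrtr //.
apply: sumr_ge0 => i _; apply: sumr_ge0 => j _; rewrite ReJ.
by apply: addr_ge0; apply: sqr_ge0.
Qed.

Lemma point_ineq (rho : op R n) k0 : k0 \in A ->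
  \sum_(q : {ffun 'I_n -> 'I_4} | supp q == A) complex.Re (\tr (pauli R q *m rho)) ^+ 2
  <= 2 ^+ #|A| * @DHS R n A (ptrace A rho) ^+ 2.
Proof.
move=> k0A.
set c : C := ((2 ^ #|A|)%:R^-1 : C).
set M := ptrace A rho - c%:M.
have hsupp : forall q : {ffun 'I_n -> 'I_4}, supp q == A ->
    \tr (pauli R q *m rho) = ctr q M.
  move=> q /eqP hq.
  have hq0 : forall k, k \notin A -> q k = 0.
    by move=> k; rewrite -hq inE negbK => /eqP.
  have qk0 : q k0 != 0 by move: k0A; rewrite -hq inE.
  rewrite tr_link // -[ptrace A rho](subrK (c%:M)) ctrD.
  by rewrite (@ctr_scalar q c k0 k0A qk0) addr0.
apply: (@le_trans _ _ (\sum_(q : {ffun 'I_n -> 'I_4} | [forall k, (k \notin A) ==> (q k == 0)])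
   complex.Re (ctr q M * Num.conj (ctr q M)))).
  rewrite [X in _ <= X]big_mkcond [X in X <= _]big_mkcond /=.
  apply: ler_sum => q _.
  case: (boolP (supp q == A)) => hq.
    have -> : [forall k, (k \notin A) ==> (q k == 0)].
      apply/forallP => k; apply/implyP; move/eqP: hq => <-.
      by rewrite inE negbK.
    by rewrite hsupp // ReJ lerDl sqr_ge0.
  by case: ifP => // _; rewrite ReJ; apply: addr_ge0; apply: sqr_ge0.
rewrite -ReSum parseval -two_pow ReM_real DHS2 ReSum.
by under eq_bigr do rewrite ReSum.
Qed.
End Sub.
End N.


End Q.
Local Open Scope classical_set_scope.

Section MC.
Context (R : realType) (d : measure_display) (T : measurableType d).
Local Notation C := (R[i]).

Lemma ReB (x y : C) : complex.Re (x - y) = complex.Re x - complex.Re y. Proof. by case: x; case: y. Qed.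
Lemma ImD (x y : C) : complex.Im (x + y) = complex.Im x + complex.Im y. Proof. by case: x; case: y. Qed.
Lemma ImB (x y : C) : complex.Im (x - y) = complex.Im x - complex.Im y. Proof. by case: x; case: y. Qed.
Lemma ReM (x y : C) : complex.Re (x * y) = complex.Re x * complex.Re y - complex.Im x * complex.Im y.
Proof. by case: x; case: y. Qed.
Lemma ImM (x y : C) : complex.Im (x * y) = complex.Re x * complex.Im y + complex.Im x * complex.Re y.
Proof. by case: x => a b; case: y => c e /=; ring. Qed.
Lemma ReJc (x : C) : complex.Re (Num.conj x) = complex.Re x. Proof. by case: x. Qed.
Lemma ImJc (x : C) : complex.Im (Num.conj x) = - complex.Im x. Proof. by case: x. Qed.

Definition mC (f : T -> C) := measurable_fun setT (fun x => complex.Re (f x)) /\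
  measurable_fun setT (fun x => complex.Im (f x)).

Lemma mC_cst c : mC (fun _ => c).
Proof. by split; exact: measurable_cst. Qed.

Lemma mC_add f g : mC f -> mC g -> mC (fun x => f x + g x).
Proof.
move=> [f1 f2] [g1 g2]; split.
  by apply: (eq_measurable_fun (fun x => complex.Re (f x) + complex.Re (g x))) => [x _|]; [rewrite ReD | exact: measurable_funD].
by apply: (eq_measurable_fun (fun x => complex.Im (f x) + complex.Im (g x))) => [x _|]; [rewrite ImD | exact: measurable_funD].
Qed.

Lemma mC_sub f g : mC f -> mC g -> mC (fun x => f x - g x).
Proof.
move=> [f1 f2] [g1 g2]; split.
  by apply: (eq_measurable_fun (fun x => complex.Re (f x) - complex.Re (g x))) => [x _|]; [rewrite ReB | exact: measurable_funB].
by apply: (eq_measurable_fun (fun x => complex.Im (f x) - complex.Im (g x))) => [x _|]; [rewrite ImB | exact: measurable_funB].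
Qed.

Lemma mC_mul f g : mC f -> mC g -> mC (fun x => f x * g x).
Proof.
move=> [f1 f2] [g1 g2]; split.
  apply: (eq_measurable_fun (fun x => complex.Re (f x) * complex.Re (g x) - complex.Im (f x) * complex.Im (g x))) => [x _|]; first by rewrite ReM.
  by apply: measurable_funB; apply: measurable_funM.
apply: (eq_measurable_fun (fun x => complex.Re (f x) * complex.Im (g x) + complex.Im (f x) * complex.Re (g x))) => [x _|]; first by rewrite ImM.
by apply: measurable_funD; apply: measurable_funM.
Qed.

Lemma mC_conj f : mC f -> mC (fun x => Num.conj (f x)).
Proof.
move=> [f1 f2]; split.
  by apply: (eq_measurable_fun (fun x => complex.Re (f x))) => // x _; rewrite ReJc.
apply: (eq_measurable_fun (fun x => - complex.Im (f x))) => [x _|]; first by rewrite ImJc.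
exact: measurableT_comp.
Qed.

Lemma mC_sum (I : finType) (F : I -> T -> C) : (forall i, mC (F i)) -> mC (fun x => \sum_i F i x).
Proof.
move=> hF; split.
  apply: (eq_measurable_fun (fun x => \sum_i complex.Re (F i x))) => [x _|]; first by rewrite ReSum.
  by apply: measurable_sum => i; case: (hF i).
apply: (eq_measurable_fun (fun x => \sum_i complex.Im (F i x))) => [x _|].
  by rewrite (big_morph _ ImD (erefl _)).
by apply: measurable_sum => i; case: (hF i).
Qed.

Definition mM a b (G : T -> 'M[C]_(a, b)) := forall i j, mC (fun x => G x i j).

Lemma mM_cst a b (M : 'M[C]_(a, b)) : mM (fun _ => M).
Proof. by move=> i j; exact: mC_cst. Qed.

Lemma eq_mC f g : (forall x, f x = g x) -> mC f -> mC g.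
Proof. by move=> e; rewrite (_ : f = g) //; apply: funext. Qed.

Lemma mM_mul a b c (G : T -> 'M[C]_(a, b)) (H : T -> 'M[C]_(b, c)) :
  mM G -> mM H -> mM (fun x => G x *m H x).
Proof.
move=> hG hH i j; apply: (@eq_mC (fun x => \sum_k G x i k * H x k j)) => [x|]; first by rewrite mxE.
by apply: mC_sum => k; apply: mC_mul.
Qed.

Lemma mM_adj a b (G : T -> 'M[C]_(a, b)) : mM G -> mM (fun x => adj (G x)).
Proof.
move=> hG i j; apply: (@eq_mC (fun x => Num.conj (G x j i))) => [x|]; first by rewrite !mxE.
exact: mC_conj.
Qed.

Lemma mM_sub a b (G H : T -> 'M[C]_(a, b)) : mM G -> mM H -> mM (fun x => G x - H x).
Proof.
move=> hG hH i j; apply: (@eq_mC (fun x => G x i j - H x i j)) => [x|]; first by rewrite !mxE.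
exact: mC_sub.
Qed.

Lemma mC_tr a (G : T -> 'M[C]_a) : mM G -> mC (fun x => \tr (G x)).
Proof. by move=> hG; apply: mC_sum. Qed.

Lemma mM_ptrace n (A : {set 'I_n}) (G : T -> op R n) : mM G -> mM (fun x => ptrace A (G x)).
Proof.
move=> hG i j; apply: (@eq_mC (fun x => \sum_(b : cfg (~: A)) G x
  (enum_rank (join A (val (enum_val i : cfg A)) (val b)))
  (enum_rank (join A (val (enum_val j : cfg A)) (val b))))) => [x|]; first by rewrite mxE.
by apply: mC_sum.
Qed.
End MC.

Section Op.
Variable R : realType.
Variable n : nat.
Local Notation C := (R[i]).
Definition opP : Type := op R n.
HB.instance Definition _ := Choice.copy opP (op R n).
HB.instance Definition _ := isPointed.Build opP (0%R : op R n).
Definition opT := g_sigma_algebraType (@op_gen R n : set (set opP)).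

Lemma mM_coord : mM (fun M : opT => (M : op R n)).
Proof.
move=> i j; split => _ B mB; rewrite setTI; apply: sub_sigma_algebra.
  by exists i, j, B; split => //; left.
by exists i, j, B; split => //; right.
Qed.

Lemma meas_opT (d : measure_display) (T : measurableType d) (G : T -> opT) :
  mM (fun x => (G x : op R n)) -> measurable_fun setT G.
Proof.
move=> hG; apply: (@measurability _ _ _ _ setT G (@op_gen R n : set (set opT))) => //.
move=> S [B [i [j [B' [mB' [->|->]]]]] <-].
  exact: (hG i j).1 measurableT B' mB'.
exact: (hG i j).2 measurableT B' mB'.
Qed.

Variables (d : measure_display) (Omega : measurableType d) (P : probability Omega R).
Local Open Scope ereal_scope.

Lemma transfer (X Y : Omega -> opT) (F : opT -> R) :
  measurable_fun setT X -> measurable_fun setT Y ->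
  (forall S, measurable S -> P (X @^-1` S) = P (Y @^-1` S)) ->
  measurable_fun setT F -> (forall M, (0 <= F M)%R) ->
  \int[P]_w (F (X w))%:E = \int[P]_w (F (Y w))%:E.
Proof.
move=> mX mY XY mF F0.
have mEF : measurable_fun [set: opT] (EFin \o F) by apply/measurable_EFinP.
have EF0 : {in setT, forall y, 0 <= (F y)%:E} by move=> y _; rewrite lee_fin.
have h1 := @ge0_integral_pushforward _ _ _ _ _ _ mX P setT _ measurableT mEF EF0.
have h2 := @ge0_integral_pushforward _ _ _ _ _ _ mY P setT _ measurableT mEF EF0.
rewrite preimage_setT in h1 h2.
rewrite -[LHS]h1 -[RHS]h2.
apply: eq_measure_integral => S mS _.
exact: XY.
Qed.
End Op.

Lemma foldr_const (T : eqType) (s : seq T) (c : nat) : foldr muln 1%N [seq c | _ <- s] = (c ^ size s)%N.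
Proof. by elim: s => //= x s ->; rewrite expnS. Qed.

Lemma card_supp n (A : {set 'I_n}) :
  #|[pred q : {ffun 'I_n -> 'I_4} | supp q == A]| = (3 ^ #|A|)%N.
Proof.
transitivity #|pfamily (0 : 'I_4) A (fun _ => predC1 (0 : 'I_4))|.
  apply: eq_card => q; rewrite !inE; apply/eqP/pfamilyP => [<-|[h1 h2]].
    split; first by apply/fintype.subsetP => k; rewrite !inE.
    by move=> k; rewrite !inE.
  apply/setP => k; rewrite inE; apply/idP/idP => [hk|kA].
    by apply: (fintype.subsetP h1); rewrite inE.
  by have := h2 k kA; rewrite inE.
rewrite card_pfamily /image_mem foldr_const -cardE.
by rewrite cardC1 card_ord.
Qed.

Unset Implicit Arguments.
Local Open Scope ring_scope.
Local Open Scope ereal_scope.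

Theorem theorem1 (R : realType) (n : nat) (rho0 : op R n)
  (d : measure_display) (Omega : measurableType d) (P : probability Omega R)
  (U : Omega -> op R n) (p : {ffun 'I_n -> 'I_4}) :
  density rho0 ->
  unitary_ensemble P U ->
  locally_scrambling P U ->
  p != [ffun => 0%R] ->
  let rho := fun w => U w *m rho0 *m adj (U w) in
  let A := supp p in
  \int[P]_w ((complex.Re (\tr (pauli R p *m rho w))) ^+ 2)%:E
  <= (((2 / 3 : R) ^+ #|A|)%:E *
      \int[P]_w ((@DHS R n A (ptrace A (rho w))) ^+ 2)%:E).
Proof.
move=> _ [hU _] hscr hp; cbv beta zeta; set A := supp p.
have [k0 k0A] : exists k0, k0 \in A.
  apply/existsP; apply: contraNT hp => /existsPn h; apply/eqP/ffunP => k.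
  by move: (h k); rewrite !inE ffunE negbK => /eqP.
have mMU : mM (fun w => (U w : op R n)) := hU.
have mU : measurable_fun setT (U : Omega -> opT R n) := meas_opT mMU.
pose Fq (q : {ffun 'I_n -> 'I_4}) (M : opT R n) : R :=
  ((complex.Re (\tr (pauli R q *m ((M : op R n) *m rho0 *m adj (M : op R n))))) ^+ 2)%R.
have mFq : forall q, measurable_fun setT (Fq q).
  move=> q; rewrite /Fq; apply: measurable_funX.
  have h := mC_tr (mM_mul (mM_cst (opT R n) (pauli R q)) (mM_mul (mM_mul (@mM_coord R n) (mM_cst (opT R n) rho0)) (mM_adj (@mM_coord R n)))).
  exact: h.1.
have Fq0 : forall q M, (0 <= Fq q M)%R by move=> q M; exact: sqr_ge0.
pose FD (M : opT R n) : R := ((@DHS R n A (ptrace A ((M : op R n) *m rho0 *m adj (M : op R n)))) ^+ 2)%R.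
pose cA : R[i] := (((2 ^ #|A|)%:R)^-1)%R.
pose N (M : opT R n) := (ptrace A ((M : op R n) *m rho0 *m adj (M : op R n)) - cA%:M)%R.
have mFD : measurable_fun setT FD.
  apply: (eq_measurable_fun (fun M => (\sum_i \sum_j complex.Re (N M j i * Num.conj (N M j i)))%R)).
    by move=> M _; rewrite /FD DHS2.
  apply: measurable_sum => i; apply: measurable_sum => j.
  have hN : mM N := mM_sub (@mM_ptrace _ _ _ _ A _ (mM_mul (mM_mul (@mM_coord R n) (mM_cst (opT R n) rho0)) (mM_adj (@mM_coord R n))))
    (mM_cst (opT R n) (cA%:M : 'M[R[i]]_#|{: cfg A}|)).
  exact: (mC_mul (hN j i) (mC_conj (hN j i))).1.
have FD0 : forall M, (0 <= FD M)%R by move=> M; exact: sqr_ge0.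
have claim1 : forall q, supp q == A ->
    \int[P]_w (Fq q (U w))%:E = \int[P]_w (Fq p (U w))%:E.
  move=> q /eqP hq.
  have hpq : forall k, (p k == 0%R) = (q k == 0%R).
    move=> k; have e : (k \in supp q) = (k \in supp p) by rewrite hq.
    by move: e; rewrite !inE => e; apply: negb_inj; rewrite e.
  have [V [cV hV]] := twirl_point R hpq.
  have e : forall w, Fq p (tensor V *m U w) = Fq q (U w).
    move=> w; rewrite /Fq -hV adj_mul.
    by rewrite !mulmxA.
  rewrite -(eq_integral _ _ (fun w _ => congr1 EFin (e w))).
  apply: (@transfer R n d Omega P (fun w => tensor V *m U w) U (Fq p)) => //.
  - apply: meas_opT; exact: (mM_mul (mM_cst Omega (tensor V)) mMU).
  - exact: hscr V cV.
pose g (q : {ffun 'I_n -> 'I_4}) (w : Omega) : R := (if supp q == A then Fq q (U w) else 0)%R.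
have mg : forall q, measurable_fun setT (g q).
  move=> q; rewrite /g; case: (supp q == A); last exact: measurable_cst.
  exact: measurableT_comp (mFq q) mU.
have g0 : forall q w, (0 <= g q w)%R by move=> q w; rewrite /g; case: ifP.
have mFDU : measurable_fun setT (fun w => (FD (U w))%:E).
  by apply/measurable_EFinP; exact: measurableT_comp mFD mU.
have e1 : ((3 ^ #|A|)%:R)%:E * \int[P]_w (Fq p (U w))%:E =
    \sum_(q | supp q == A) \int[P]_w (Fq q (U w))%:E.
  rewrite mule_natl -card_supp (eq_bigr (fun=> \int[P]_w (Fq p (U w))%:E)); last by move=> q hq; rewrite claim1.
  by rewrite sumr_const.
have e2 : \sum_(q | supp q == A) \int[P]_w (Fq q (U w))%:E = \int[P]_w (\sum_q g q w)%:E.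
  rewrite big_mkcond /=.
  under eq_integral do rewrite -sumEFin.
  rewrite ge0_integral_sum //; last first.
  - by move=> q w _; rewrite lee_fin.
  - by move=> q; apply/measurable_EFinP.
  apply: eq_bigr => q _; rewrite /g; case: (supp q == A) => //.
  by rewrite integral0_eq.
have e3 : (2 ^+ #|A|)%:E * \int[P]_w (FD (U w))%:E =
    \int[P]_w ((2 ^+ #|A|)%R%:E * (FD (U w))%:E).
  rewrite ge0_integralZl_EFin //.
  by move=> w _; rewrite lee_fin.
have key : ((3 ^ #|A|)%:R)%:E * \int[P]_w (Fq p (U w))%:E <=
    (2 ^+ #|A|)%:E * \int[P]_w (FD (U w))%:E.
  rewrite e1 e2 e3.
  apply: ge0_le_integral => //.
  - by move=> w _; rewrite lee_fin; apply: sumr_ge0 => q _.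
  - apply/measurable_EFinP; exact: measurable_sum.
  - by apply: measurable_funeM.
  move=> w _; rewrite -EFinM lee_fin.
  rewrite /g -big_mkcond /=.
  exact: (point_ineq (U w *m rho0 *m adj (U w)) k0A).
have goal : \int[P]_w (Fq p (U w))%:E <= ((2 / 3 : R) ^+ #|A|)%:E * \int[P]_w (FD (U w))%:E.
  have n3 : ((3 ^ #|A|)%:R : R) != 0%R by rewrite pnatr_eq0 expn_eq0.
  have hk : (((2 / 3 : R) ^+ #|A|) = ((3 ^ #|A|)%:R)^-1 * 2 ^+ #|A|)%R.
    by rewrite expr_div_n natrX mulrC.
  rewrite hk EFinM -muleA.
  have eI : \int[P]_w (Fq p (U w))%:E =
      (((3 ^ #|A|)%:R)^-1)%:E * (((3 ^ #|A|)%:R)%:E * \int[P]_w (Fq p (U w))%:E).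
    by rewrite muleA -EFinM mulVf // mul1e.
  rewrite {1}eI.
  apply: lee_wpmul2l => //.
exact: goal.
Qed.
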